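(* Let $S$ be a simplicial poset, $\mu\colon E(S)\to\mathbb{Z}_+$ an edge multiplicity function, $I\in S$, and $c_I\colon E(I)\to\mathbb{Z}_+$ with $c_I(e)\in\{1,\dots,\mu(e)\}$. Then \[ \mathrm{lk}_{S_\mu}(I,c_I)\cong(\mathrm{lk}_S I)_{\tilde\mu,\tilde\nu}, \] where $\tilde\mu=\mu\circ\mathrm{rest}\colon E(\mathrm{lk}_S I)\to\mathbb{Z}_+$, and $\tilde\nu\colon V(\mathrm{lk}_S I)\to\mathbb{Z}_+$ is given by $\tilde\nu(J)=\prod_{e\in E(J)\setminus E(I)}\mu(e)$ for each $J>I$ with $\dim J=\dim I+1$.
   Context: A finite poset $S$ is a simplicial poset if for every $I\in S$ the lower set $S_{\leqslant I}$ is isomorphic to the poset of nonempty faces of a $k$-simplex; $k=\dim I$. $V(X)$, $E(X)$ denote the sets of vertices (dimension 0) and edges (dimension 1) of $X$ or below $X$; every subset of $V(J)$ is the vertex set of a unique element $\leqslant J$. $\mathrm{lk}_S I=S_{>I}$, a simplicial poset whose vertices are the $J>I$ with $\dim J=\dim I+1$ and whose edges are the $J>I$ with $\dim J=\dim I+2$. The map $\mathrm{rest}\colon E(\mathrm{lk}_SI)\to E(S)$ sends such $J$ to the unique edge of $S$ below $J$ with vertex set $V(J)\setminus V(I)$. Edge inflation: $S_\mu$ is the poset of pairs $(I,c_I)$, $c_I\colon E(I)\to\mathbb{Z}_+$, $c_I(e)\in\{1,\dots,\mu(e)\}$, ordered by $(I,c_I)<(J,c_J)$ iff $I<J$ and $c_I=c_J|_{E(I)}$.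 For a simplicial poset $L$ with edge function $\mu\colon E(L)\to\mathbb{Z}_+$ and vertex function $\nu\colon V(L)\to\mathbb{Z}_+$, $L_{\mu,\nu}$ is the poset of triples $(J,d_J,c_J)$ with $J\in L$, $d_J\colon V(J)\to\mathbb{Z}_+$, $d_J(v)\in\{1,\dots,\nu(v)\}$, $c_J\colon E(J)\to\mathbb{Z}_+$, $c_J(e)\in\{1,\dots,\mu(e)\}$, ordered by $(J,d_J,c_J)\leqslant(J',d_{J'},c_{J'})$ iff $J\leqslant J'$, $d_{J'}|_{V(J)}=d_J$ and $c_{J'}|_{E(J)}=c_J$. *)

(* Defs.v *)
From mathcomp Require Import all_boot.

Definition ltb {A : eqType} (leA : rel A) (x y : A) : bool := (y != x) && leA x y.

Definition partial_order {A : Type} (leA : rel A) : Prop :=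
  [/\ reflexive leA, antisymmetric leA & transitive leA].

Definition poset_iso {A B : Type} (leA : rel A) (leB : rel B) : Prop :=
  exists f : A -> B, bijective f /\ forall x y, leA x y = leB (f x) (f y).

Definition uplink {A : eqType} (leA : rel A) (x : A) := {y : A | ltb leA x y}.
Definition uplink_le {A : eqType} (leA : rel A) (x : A) : rel (uplink leA x) :=
  fun y z => leA (sval y) (sval z).

Section FinPoset.
Context {T : finType} (le : rel T).

(* S is a simplicial poset: a finite poset in which every lower set S_{<=I}
   is isomorphic to the poset of nonempty faces (nonempty subsets of the
   vertex set 'I_k.+1) of a k-simplex, ordered by inclusion. *)
Definition simplicial_poset : Prop :=
  partial_order le /\
  forall I : T, exists k : nat, exists f : T -> {set 'I_k.+1},
    [/\ {in [pred J | le J I] &, injective f},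
        (forall J, le J I -> f J != set0),
        (forall A : {set 'I_k.+1}, A != set0 -> exists2 J, le J I & f J = A) &
        (forall J J', le J I -> le J' I -> le J J' = (f J \subset f J'))].

Definition minimal (v : T) : bool := [forall w, le w v ==> (w == v)].
(* V(J): vertices (dimension-0 elements = minimal elements) below J *)
Definition Vs (J : T) : {set T} := [set v | minimal v && le v J].
(* dim J = k when S_{<=J} is the face poset of a k-simplex, i.e. |V(J)| = k+1 *)
Definition dim (J : T) : nat := (#|Vs J|).-1.
Definition Es (J : T) : {set T} := [set e | (dim e == 1) && le e J].

Definition link (I : T) := {J : T | ltb le I J}.
Definition link_le (I : T) : rel (link I) := fun J J' => le (val J) (val J').

(* rest : E(lk_S I) -> E(S), J |-> the unique edge e <= J with
   V(e) = V(J) \ V(I).  (The default value is irrelevant on edges of the link.) *)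
Definition rest (I : T) (J : link I) : T :=
  odflt (val J) [pick e in Es (val J) | Vs e == Vs (val J) :\: Vs I].

(* Edge-labelling c : E(I) -> Z_+ with c(e) in {1..mu e}, encoded as a
   function on T vanishing outside E(I). *)
Definition valid_c (mu : T -> nat) (I : T) (c : {ffun T -> nat}) : bool :=
  [forall e, if e \in Es I then (0 < c e <= mu e) else c e == 0].

Definition Smu (mu : T -> nat) := {p : T * {ffun T -> nat} | valid_c mu p.1 p.2}.
Definition Smu_le (mu : T -> nat) : rel (Smu mu) := fun x y =>
  le (val x).1 (val y).1 && [forall e in Es (val x).1, (val x).2 e == (val y).2 e].

Definition mkSmu (mu : T -> nat) (I : T) (c : {ffun T -> nat})
  (hc : valid_c mu I c) : Smu mu := exist _ (I, c) hc.

(* L_{mu,nu}: triples (J, d_J, c_J); d_J, c_J encoded as functions on T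
   vanishing outside V(J), resp. E(J). *)
Definition valid_dc (mu nu : T -> nat) (J : T) (d c : {ffun T -> nat}) : bool :=
  [forall v, if v \in Vs J then (0 < d v <= nu v) else d v == 0] &&
  [forall e, if e \in Es J then (0 < c e <= mu e) else c e == 0].

Definition Lmunu (mu nu : T -> nat) :=
  {t : T * {ffun T -> nat} * {ffun T -> nat} | valid_dc mu nu t.1.1 t.1.2 t.2}.
Definition Lmunu_le (mu nu : T -> nat) : rel (Lmunu mu nu) := fun x y =>
  [&& le (val x).1.1 (val y).1.1,
      [forall v in Vs (val x).1.1, (val y).1.2 v == (val x).1.2 v] &
      [forall e in Es (val x).1.1, (val y).2 e == (val x).2 e]].

End FinPoset.

Definition mu_tilde {T : finType} (le : rel T) (mu : T -> nat) (I : T)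
  : link le I -> nat := fun J => mu (rest le I J).
Definition nu_tilde {T : finType} (le : rel T) (mu : T -> nat) (I : T)
  : link le I -> nat := fun J => \prod_(e in Es le (val J) :\: Es le I) mu e.

(* Main.v *)
Require Import Defs.
From mathcomp Require Import all_boot zify.
From Stdlib Require Import ClassicalEpsilon.

Module Aux.
Set Implicit Arguments. Unset Strict Implicit. Unset Printing Implicit Defensive.

Lemma s1n0 (K : finType) (i : K) : [set i] != set0.
Proof. by apply/set0Pn; exists i; rewrite inE. Qed.

Section Basics.
Variables (T : finType) (le : rel T) (hS : simplicial_poset le).

Lemma le_refl x : le x x.
Proof. by case: hS => [[]]. Qed.
Lemma le_trans' y x z : le x y -> le y z -> le x z.
Proof. case: hS => [[_ _ t]] _; exact: t. Qed.
Lemma le_anti x y : le x y -> le y x -> x = y.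
Proof. case: hS => [[_ a _]] _ h1 h2; apply: a; by rewrite h1 h2. Qed.

Lemma Vs_sub J J' : le J J' -> Vs le J \subset Vs le J'.
Proof.
move=> h; apply/subsetP => v; rewrite !inE => /andP[-> hv] /=.
exact: le_trans' hv h.
Qed.

Lemma in_Vs v J : (v \in Vs le J) = minimal le v && le v J.
Proof. by rewrite inE. Qed.

Lemma keyX X : exists k, exists f : T -> {set 'I_k.+1},
  [/\ {in [pred J | le J X] &, injective f},
        (forall J, le J X -> f J != set0),
        (forall A : {set 'I_k.+1}, A != set0 -> exists2 J, le J X & f J = A),
        (forall J J', le J X -> le J' X -> le J J' = (f J \subset f J')) &
        (forall v, le v X -> minimal le v = [exists i, f v == [set i]])].
Proof.
have [k [f [finj fne fsurj fle]]] := hS.2 X.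
exists k, f; split => // v hv; apply/idP/idP.
- move=> hmin; have /set0Pn[i hi] := fne v hv.
  have [w hw fw] := fsurj [set i] (s1n0 i).
  have hwv : le w v by rewrite (fle w v hw hv) fw sub1set.
  have := forallP hmin w; rewrite hwv /= => /eqP ewv.
  by apply/existsP; exists i; rewrite -fw ewv.
- case/existsP => i /eqP fi; apply/forallP => w; apply/implyP => hwv.
  have hw : le w X := le_trans' hwv hv.
  have : f w \subset f v by rewrite -fle.
  rewrite fi subset1 (negbTE (fne w hw)) orbF => /eqP fw.
  by apply/eqP; apply: finj; rewrite ?inE // fw fi.
Qed.

Lemma VSa X J J' : le J X -> le J' X -> le J J' = (Vs le J \subset Vs le J').
Proof.
move=> hJ hJ'; apply/idP/idP; first exact: Vs_sub.
have [k [f [finj fne fsurj fle fmin]]] := keyX X.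
move=> hsub; rewrite (fle J J' hJ hJ'); apply/subsetP => i hi.
have [w hw fw] := fsurj [set i] (s1n0 i).
have hwJ : le w J by rewrite (fle w J hw hJ) fw sub1set.
have : w \in Vs le J by rewrite in_Vs hwJ andbT fmin //; apply/existsP; exists i; rewrite fw.
move/(subsetP hsub); rewrite in_Vs => /andP[_ hwJ'].
by move: hwJ'; rewrite (fle w J' hw hJ') fw sub1set.
Qed.

Lemma VSb X (A : {set T}) : A \subset Vs le X -> A != set0 ->
  exists2 J, le J X & Vs le J = A.
Proof.
move=> hA /set0Pn[v0 hv0].
have [k [f [finj fne fsurj fle fmin]]] := keyX X.
have hAX v : v \in A -> minimal le v /\ le v X.
  by move/(subsetP hA); rewrite in_Vs => /andP[].
set B := \bigcup_(v in A) f v.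
have hB : B != set0.
  have [_ h0] := hAX v0 hv0; have /set0Pn[i hi] := fne v0 h0.
  by apply/set0Pn; exists i; apply/bigcupP; exists v0.
have [J hJ fJ] := fsurj B hB; exists J => //.
apply/setP => v; rewrite in_Vs; apply/idP/idP.
- case/andP => hmin hvJ; have hv : le v X := le_trans' hvJ hJ.
  move: (hmin); rewrite fmin // => /existsP[i /eqP fi].
  have : i \in B by rewrite -fJ; move: hvJ; rewrite (fle v J hv hJ) fi sub1set.
  case/bigcupP => v' hv' hi.
  have [hmin' hv'X] := hAX v' hv'.
  move: (hmin'); rewrite fmin // => /existsP[i' /eqP fi'].
  move: hi; rewrite fi' inE => /eqP ei; subst i'.
  have -> : v = v' by apply: finj; rewrite ?inE // fi fi'.
  done.
- move=> hv; have [hmin hvX] := hAX v hv.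
  by rewrite hmin (fle v J hvX hJ) fJ; apply: (bigcup_sup v).
Qed.

Lemma Vs_neq0 J : Vs le J != set0.
Proof.
have [k [f [finj fne fsurj fle fmin]]] := keyX J.
have /set0Pn[i hi] := fne J (le_refl J).
have [w hw fw] := fsurj [set i] (s1n0 i).
apply/set0Pn; exists w; rewrite in_Vs hw fmin // andbT.
by apply/existsP; exists i; rewrite fw.
Qed.

Lemma Vinj X J J' : le J X -> le J' X -> Vs le J = Vs le J' -> J = J'.
Proof.
move=> h h' e; apply: le_anti; [rewrite (VSa h h') e | rewrite (VSa h' h) e] => //.
Qed.

Definition face X (A : {set T}) := odflt X [pick J | le J X && (Vs le J == A)].

Lemma faceP X (A : {set T}) : A \subset Vs le X -> A != set0 ->
  le (face X A) X /\ Vs le (face X A) = A.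
Proof.
move=> h1 h2; rewrite /face; case: pickP => [J /andP[h /eqP e]|] //=.
by have [J hJ eJ] := VSb h1 h2 => /(_ J); rewrite hJ eJ eqxx.
Qed.

End Basics.

Section Enc.
Variables (T : eqType) (m : T -> nat).

Fixpoint enc (s : seq T) (c : T -> nat) : nat :=
  if s is e :: s' then (c e).-1 + m e * enc s' c else 0.
Fixpoint dec (s : seq T) (x : nat) (e : T) : nat :=
  if s is e' :: s' then (if e == e' then (x %% m e').+1 else dec s' (x %/ m e') e)
  else 0.

Lemma enc_ext s c1 c2 : {in s, forall e, c1 e = c2 e} -> enc s c1 = enc s c2.
Proof.
elim: s => //= e s IH h; rewrite h ?mem_head // IH // => e' he'.
by apply: h; rewrite inE he' orbT.
Qed.

Lemma enc_lt s c : {in s, forall e, 0 < c e <= m e} -> enc s c < \prod_(e <- s) m e.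
Proof.
elim: s => [|e s IH] h /=; first by rewrite big_nil.
rewrite big_cons.
have /andP[h1 h2] := h e (mem_head _ _).
have h3 : enc s c < \prod_(e <- s) m e by apply: IH => e' he'; apply: h; rewrite inE he' orbT.
set P := \prod_(e <- s) m e in h3 *.
have : m e * (enc s c).+1 <= m e * P by rewrite leq_mul2l h3 orbT.
lia.
Qed.

Lemma enc_inj s c1 c2 : {in s, forall e, 0 < c1 e <= m e} ->
  {in s, forall e, 0 < c2 e <= m e} -> enc s c1 = enc s c2 -> {in s, forall e, c1 e = c2 e}.
Proof.
elim: s => [|e s IH] //= h1 h2 heq.
have /andP[a1 b1] := h1 e (mem_head _ _).
have /andP[a2 b2] := h2 e (mem_head _ _).
have hm : 0 < m e by lia.
have e1 : ((c1 e).-1 + m e * enc s c1) %% m e = (c1 e).-1.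
  by rewrite addnC mulnC modnMDl modn_small //; lia.
have e2 : ((c2 e).-1 + m e * enc s c2) %% m e = (c2 e).-1.
  by rewrite addnC mulnC modnMDl modn_small //; lia.
have f1 : ((c1 e).-1 + m e * enc s c1) %/ m e = enc s c1.
  by rewrite addnC mulnC divnMDl // divn_small ?addn0 //; lia.
have f2 : ((c2 e).-1 + m e * enc s c2) %/ m e = enc s c2.
  by rewrite addnC mulnC divnMDl // divn_small ?addn0 //; lia.
have ec : c1 e = c2 e by move: e1 e2; rewrite heq => -> ?; lia.
have IH' := IH (fun e' he' => h1 e' (mem_behead (s:=e::s) he')) (fun e' he' => h2 e' (mem_behead (s:=e::s) he')).
move=> e'; rewrite inE => /orP[/eqP -> //|he']; apply: IH' => //.
by rewrite -f1 -f2 heq.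
Qed.

Lemma dec_range s x e : {in s, forall e, 0 < m e} -> e \in s -> 0 < dec s x e <= m e.
Proof.
elim: s x => //= e' s IH x h; rewrite inE; case: eqP => [-> _|_ /= he].
  by rewrite ltn_pmod // h ?mem_head.
by apply: IH => // e'' he''; apply: h; rewrite inE he'' orbT.
Qed.

Lemma enc_dec s x : uniq s -> {in s, forall e, 0 < m e} -> x < \prod_(e <- s) m e ->
  enc s (dec s x) = x.
Proof.
elim: s x => [|e s IH] x /=; first by rewrite big_nil; case: x.
case/andP => hes hu h; rewrite big_cons => hx.
have hm : 0 < m e by apply: h; rewrite mem_head.
rewrite eqxx /=.
rewrite (@enc_ext s _ (dec s (x %/ m e))); last first.
  by move=> e' he'; case: eqP => // ee; move: hes; rewrite -ee he'.
rewrite IH //; first by rewrite /= mulnC addnC -divn_eq.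
  by move=> e' he'; apply: h; rewrite inE he' orbT.
by rewrite ltn_divLR // mulnC.
Qed.
End Enc.

Section Link.
Variables (T : finType) (le : rel T) (hS : simplicial_poset le) (I : T).
Local Notation VI := (Vs le I).
Local Notation n := #|Vs le I|.
Local Notation Lk := (link le I).

Lemma link_le_I (J : Lk) : le I (val J).
Proof. by case: J => J /= /andP[]. Qed.
Lemma link_neq (J : Lk) : val J != I.
Proof. by case: J => J /= /andP[]. Qed.

Lemma cardD X : le I X -> #|Vs le X :\: VI| = #|Vs le X| - n.
Proof. by move=> h; rewrite cardsDS // Vs_sub. Qed.
Lemma VsU X : le I X -> Vs le X = VI :|: (Vs le X :\: VI).
Proof.
move=> h; apply/setP => x; rewrite in_setU in_setD.
by case: (boolP (x \in VI)) => //= hx; rewrite (subsetP (Vs_sub hS h)).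
Qed.

Lemma link_card (J : Lk) : n < #|Vs le (val J)|.
Proof.
apply: proper_card; rewrite properEneq Vs_sub ?link_le_I // andbT.
apply/eqP => e; have := link_neq J.
by rewrite -(Vinj hS (link_le_I J) (le_refl hS _) e) eqxx.
Qed.

Lemma face_link X (A : {set T}) : le I X -> VI \subset A -> A \subset Vs le X ->
  [/\ le I (face le X A), le (face le X A) X & Vs le (face le X A) = A].
Proof.
move=> hX h1 h2.
have hA : A != set0.
  have /set0Pn[x hx] := Vs_neq0 hS I.
  by apply/set0Pn; exists x; apply: (subsetP h1).
have [hf vf] := faceP hS h2 hA.
by split => //; rewrite (VSa hS hX hf) vf.
Qed.

Lemma face_ltb X (A : {set T}) : le I X -> VI \subset A -> A \subset Vs le X ->
  ~~ (A \subset VI) -> ltb le I (face le X A).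
Proof.
move=> hX h1 h2 h3; have [a b e] := face_link hX h1 h2.
rewrite /ltb a andbT; apply/eqP => ef; move: h3; by rewrite -e ef subxx.
Qed.

Lemma minimal_link (v : Lk) :
  minimal (link_le le I) v = (#|Vs le (val v)| == n.+1).
Proof.
apply/idP/idP.
- move=> hmin.
  have : 0 < #|Vs le (val v) :\: VI| by rewrite cardD ?link_le_I // subn_gt0 link_card.
  case/card_gt0P => b hb.
  have hbI : b \notin VI by move: hb; rewrite inE => /andP[].
  have hbv : b \in Vs le (val v) by move: hb; rewrite inE => /andP[].
  have h1 : VI \subset b |: VI by apply: subsetUr.
  have h2 : b |: VI \subset Vs le (val v) by rewrite subUset sub1set hbv Vs_sub ?link_le_I.
  have h3 : ~~ (b |: VI \subset VI) by rewrite subUset sub1set (negbTE hbI).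
  have pf := face_ltb (link_le_I v) h1 h2 h3.
  have [_ hle ve] := face_link (link_le_I v) h1 h2.
  have := forallP hmin (exist (ltb le I) _ pf); rewrite /link_le /= hle /= => /eqP ev.
  by rewrite -ev /= ve cardsU1 hbI.
- move=> /eqP hc; apply/forallP => w; apply/implyP; rewrite /link_le => hwv.
  have hs := Vs_sub hS hwv.
  have hw := link_card w.
  have : Vs le (val w) == Vs le (val v) by rewrite eqEcard hs hc.
  move/eqP/(Vinj hS hwv (le_refl hS _)) => e.
  by apply/eqP; apply: val_inj.
Qed.

Lemma inVsl (K v : Lk) : (v \in Vs (link_le le I) K) =
  (#|Vs le (val v)| == n.+1) && le (val v) (val K).
Proof. by rewrite inE minimal_link. Qed.

Lemma vert_Vs (v : Lk) b : #|Vs le (val v)| = n.+1 -> b \in Vs le (val v) -> b \notin VI ->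
  Vs le (val v) = b |: VI.
Proof.
move=> hc hb hbI.
have : #|Vs le (val v) :\: VI| == 1 by rewrite cardD ?link_le_I // hc subSnn.
case/cards1P => x ex.
have : b \in Vs le (val v) :\: VI by rewrite inE hbI hb.
rewrite ex inE => /eqP ebx; subst x.
by rewrite (VsU (link_le_I v)) ex setUC.
Qed.

Lemma cardVsl (w : Lk) : #|Vs (link_le le I) w| = #|Vs le (val w)| - n.
Proof.
have -> : #|Vs (link_le le I) w| = #|val @: Vs (link_le le I) w|.
  by rewrite card_imset //; exact: val_inj.
rewrite -cardD ?link_le_I //.
have -> : val @: Vs (link_le le I) w =
   (fun b => face le (val w) (b |: VI)) @: (Vs le (val w) :\: VI).
  apply/setP => x; apply/imsetP/imsetP.
  - case=> v; rewrite inVsl => /andP[/eqP hc hvw] ->.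
    have : #|Vs le (val v) :\: VI| == 1 by rewrite cardD ?link_le_I // hc subSnn.
    case/cards1P => b eb.
    have hb : b \in Vs le (val v) :\: VI by rewrite eb set11.
    move: (hb); rewrite inE => /andP[hbI hbv].
    exists b; first by rewrite inE hbI (subsetP (Vs_sub hS hvw)).
    have h1 : VI \subset b |: VI by apply: subsetUr.
    have h2 : b |: VI \subset Vs le (val w).
      by rewrite subUset sub1set (subsetP (Vs_sub hS hvw)) // Vs_sub ?link_le_I.
    have [_ hf vf] := face_link (link_le_I w) h1 h2.
    apply: (Vinj hS hvw hf); by rewrite vf (vert_Vs hc hbv hbI).
  - case=> b; rewrite in_setD => /andP[hbI hbw] ->.
    have h1 : VI \subset b |: VI by apply: subsetUr.
    have h2 : b |: VI \subset Vs le (val w) by rewrite subUset sub1set hbw Vs_sub ?link_le_I.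
    have h3 : ~~ (b |: VI \subset VI) by rewrite subUset sub1set (negbTE hbI).
    have pf := face_ltb (link_le_I w) h1 h2 h3.
    have [_ hf vf] := face_link (link_le_I w) h1 h2.
    exists (exist (ltb le I) _ pf); last by [].
    rewrite inVsl /= vf cardsU1 hbI hf andbT add1n; done.
apply: card_in_imset => b b'; rewrite !in_setD => /andP[hbI hbw] /andP[hbI' hbw'] e.
have h2 : b |: VI \subset Vs le (val w) by rewrite subUset sub1set hbw Vs_sub ?link_le_I.
have h2' : b' |: VI \subset Vs le (val w) by rewrite subUset sub1set hbw' Vs_sub ?link_le_I.
have [_ _ vf] := face_link (link_le_I w) (subsetUr _ _) h2.
have [_ _ vf'] := face_link (link_le_I w) (subsetUr _ _) h2'.
have : b \in b' |: VI by rewrite -vf' -e vf setU11.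
by rewrite in_setU1 (negbTE hbI) orbF => /eqP.
Qed.

Lemma dim_link (w : Lk) : (dim (link_le le I) w == 1) = (#|Vs le (val w)| == n.+2).
Proof. rewrite /dim cardVsl; have := link_card w; lia. Qed.

Lemma inEsl (K w : Lk) : (w \in Es (link_le le I) K) =
  (#|Vs le (val w)| == n.+2) && le (val w) (val K).
Proof. by rewrite inE dim_link. Qed.

Lemma inEs e J : (e \in Es le J) = (#|Vs le e| == 2) && le e J.
Proof. by rewrite inE /dim; case: #|_| => [|[|[|]]]. Qed.

Lemma rest_spec (w : Lk) : #|Vs le (val w)| = n.+2 ->
  [/\ le (rest le I w) (val w), Vs le (rest le I w) = Vs le (val w) :\: VI
    & #|Vs le (rest le I w)| = 2].
Proof.
move=> hc; have hA : #|Vs le (val w) :\: VI| = 2 by rewrite cardD ?link_le_I // hc; lia.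
rewrite /rest; case: pickP => [e /andP[he /eqP ve] | none] /=.
  by move: he; rewrite inEs => /andP[_ ->]; rewrite ve hA.
exfalso.
have hne : Vs le (val w) :\: VI != set0 by rewrite -card_gt0 hA.
have [hf vf] := faceP hS (subsetDl _ _) hne.
have := none (face le (val w) (Vs le (val w) :\: VI)); rewrite /= inEs vf hA hf eqxx /=.
by have -> : (Vs le (val w) :\: VI == Vs le (sval w) :\: VI) = true by apply/eqP.
Qed.

Lemma Es_notI X e : le I X -> e \in Es le X -> e \notin Es le I ->
  exists2 b, b \in Vs le e & b \notin VI.
Proof.
move=> hX; rewrite !inEs => /andP[hc heX] heI.
apply/subsetPn; apply: contra heI => hsub.
by rewrite hc (VSa hS heX hX).
Qed.

Lemma U1 (v v' : Lk) X e : #|Vs le (val v)| = n.+1 -> #|Vs le (val v')| = n.+1 ->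
  le (val v) X -> le (val v') X ->
  e \in Es le (val v) :\: Es le I -> e \in Es le (val v') :\: Es le I -> v = v'.
Proof.
move=> hc hc' hv hv'; rewrite !in_setD => /andP[heI he] /andP[_ he'].
have [b hb hbI] := Es_notI (link_le_I v) he heI.
have hbv : b \in Vs le (val v).
  by move: he; rewrite inEs => /andP[_ h]; apply: (subsetP (Vs_sub hS h)).
have hbv' : b \in Vs le (val v').
  by move: he'; rewrite inEs => /andP[_ h]; apply: (subsetP (Vs_sub hS h)).
apply: val_inj; apply: (Vinj hS hv hv').
by rewrite (vert_Vs hc hbv hbI) (vert_Vs hc' hbv' hbI).
Qed.

Lemma U2a (w v : Lk) : #|Vs le (val w)| = n.+2 -> #|Vs le (val v)| = n.+1 ->
  rest le I w \notin Es le (val v).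
Proof.
move=> hw hv; have [hr vr cr] := rest_spec hw.
rewrite inEs cr /=; apply/negP => hle.
have : Vs le (rest le I w) \subset Vs le (val v) :\: VI.
  apply/subsetP => x hx; move: (hx); rewrite vr in_setD => /andP[hxI _].
  by rewrite in_setD hxI (subsetP (Vs_sub hS hle)).
move/subset_leq_card; rewrite cr cardD ?link_le_I // hv subSnn //.
Qed.

Lemma U2b (w : Lk) : #|Vs le (val w)| = n.+2 -> rest le I w \notin Es le I.
Proof.
move=> hw; have [hr vr cr] := rest_spec hw.
rewrite inEs cr /=; apply/negP => hle.
have : 0 < #|Vs le (rest le I w)| by rewrite cr.
case/card_gt0P => x hx; move: (hx); rewrite vr in_setD => /andP[hxI _].
by move: hxI; rewrite (subsetP (Vs_sub hS hle)).
Qed.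

Lemma U3 (w w' : Lk) X : #|Vs le (val w)| = n.+2 -> #|Vs le (val w')| = n.+2 ->
  le (val w) X -> le (val w') X -> rest le I w = rest le I w' -> w = w'.
Proof.
move=> hc hc' hw hw' e.
have [_ vr _] := rest_spec hc; have [_ vr' _] := rest_spec hc'.
apply: val_inj; apply: (Vinj hS hw hw').
by rewrite (VsU (link_le_I w)) (VsU (link_le_I w')) -vr -vr' e.
Qed.

Lemma coverage (J : Lk) e : e \in Es le (val J) -> e \notin Es le I ->
  (exists v : Lk, [/\ #|Vs le (val v)| = n.+1, le (val v) (val J)
                    & e \in Es le (val v) :\: Es le I]) \/
  (exists w : Lk, [/\ #|Vs le (val w)| = n.+2, le (val w) (val J) & rest le I w = e]).
Proof.
move=> he heI; have [b hb hbI] := Es_notI (link_le_I J) he heI.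
move: (he); rewrite inEs => /andP[/eqP hce heJ].
have hJ := link_le_I J.
have hVe := Vs_sub hS heJ.
set B := Vs le e :\: VI.
have hbB : b \in B by rewrite in_setD hbI hb.
have hB2 : #|B| <= 2 by rewrite -hce subset_leq_card // subsetDl.
have hB1 : 0 < #|B| by apply/card_gt0P; exists b.
have hbJ : b \in Vs le (val J) by apply: (subsetP hVe).
case: (ltngtP #|B| 1) => hB; first by move: hB1; rewrite ltnNge -ltnS hB.
- right.
  have eB : B = Vs le e by apply/eqP; rewrite eqEcard subsetDl hce.
  set A := VI :|: Vs le e.
  have h1 : VI \subset A by apply: subsetUl.
  have h2 : A \subset Vs le (val J) by rewrite subUset hVe Vs_sub.
  have h3 : ~~ (A \subset VI) by apply/subsetPn; exists b; rewrite // inE hb orbT.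
  have pf := face_ltb hJ h1 h2 h3.
  have [_ hf vf] := face_link hJ h1 h2.
  have AD : A :\: VI = Vs le e.
    apply/setP => x; rewrite -eB !in_setD in_setU; case: (x \in VI) => //=.
  have hA : #|A| = n.+2.
    have := cardsDS h1; rewrite AD hce => h.
    by rewrite -(subnK (subset_leq_card h1)) -h add2n.
  set F := face le (val J) A in pf hf vf.
  have hw : #|Vs le (val (exist (ltb le I) F pf))| = n.+2 by rewrite /= vf hA.
  exists (exist (ltb le I) F pf); split => //.
  have [hr vr cr] := rest_spec hw.
  move: hr vr; rewrite /= vf AD => hr vr.
  by apply: (Vinj hS (le_trans' hS hr hf) heJ).
- left.
  have /cards1P [x ex] : #|B| == 1 by rewrite hB.
  move: hbB; rewrite ex inE => /eqP ebx; subst x.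
  set A := b |: VI.
  have h1 : VI \subset A by apply: subsetUr.
  have h2 : A \subset Vs le (val J) by rewrite subUset sub1set hbJ Vs_sub.
  have h3 : ~~ (A \subset VI) by rewrite subUset sub1set (negbTE hbI).
  have pf := face_ltb hJ h1 h2 h3.
  have [_ hf vf] := face_link hJ h1 h2.
  set F := face le (val J) A in pf hf vf.
  exists (exist (ltb le I) F pf); rewrite /= vf cardsU1 hbI; split => //.
  rewrite in_setD heI inEs hce /= (VSa hS heJ hf) vf.
  apply/subsetP => y hy; rewrite in_setU1; case: (boolP (y \in VI)) => hyI; first by rewrite orbT.
  rewrite orbF; have : y \in B by rewrite in_setD hyI hy.
  by rewrite ex in_set1.
Qed.
End Link.

Section Main.
Variables (T : finType) (le : rel T) (hS : simplicial_poset le) (mu : T -> nat)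
  (hmu : forall e : T, dim le e = 1 -> 0 < mu e)
  (I : T) (c : {ffun T -> nat}) (hc : valid_c le mu I c).

Local Notation x0 := (mkSmu le mu I c hc).
Local Notation Up := (uplink (Smu_le le mu) x0).
Local Notation Lk := (link le I).
Local Notation n := #|Vs le I|.

Lemma validP J (cJ : {ffun T -> nat}) : valid_c le mu J cJ ->
  (forall e, e \in Es le J -> 0 < cJ e <= mu e) /\ (forall e, e \notin Es le J -> cJ e = 0).
Proof.
move/forallP => h; split => e he; have := h e; first by rewrite he.
by rewrite (negbTE he) => /eqP.
Qed.

Lemma Es_mono X Y e : le X Y -> e \in Es le X -> e \in Es le Y.
Proof. by move=> h; rewrite !inEs => /andP[h1 h']; rewrite h1 (le_trans' hS h' h). Qed.

Definition Jx (x : Up) : T := (val (val x)).1.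
Definition cx (x : Up) : {ffun T -> nat} := (val (val x)).2.

Lemma cx_valid x : valid_c le mu (Jx x) (cx x).
Proof. exact: (valP (val x)). Qed.

Lemma up_prop x : [/\ val x != x0, le I (Jx x) & [forall e in Es le I, c e == cx x e]].
Proof. by have := valP x; rewrite /ltb /Smu_le /= => /andP[-> /andP[-> ->]]. Qed.

Lemma vvx x : val (val x) = (Jx x, cx x).
Proof. by rewrite /Jx /cx; case: (val (val x)). Qed.

Lemma up_ltb x : ltb le I (Jx x).
Proof.
have [hne hle hagr] := up_prop x.
rewrite /ltb hle andbT; apply/eqP => eJ; move/eqP: hne; apply.
apply: val_inj; rewrite vvx /= eJ; congr (_, _).
have [_ h0] := validP (cx_valid x); have [_ h0c] := validP hc.
apply/ffunP => e; case: (boolP (e \in Es le I)) => he.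
  by have := forallP hagr e; rewrite he => /eqP.
by rewrite h0c // h0 // eJ.
Qed.

Definition Kx x : Lk := exist (ltb le I) (Jx x) (up_ltb x).
Definition sv (v : Lk) : seq T := enum (Es le (val v) :\: Es le I).
Definition dF x : {ffun Lk -> nat} :=
  [ffun v => if v \in Vs (link_le le I) (Kx x) then (enc mu (sv v) (cx x)).+1 else 0].
Definition cF x : {ffun Lk -> nat} :=
  [ffun w => if w \in Es (link_le le I) (Kx x) then cx x (rest le I w) else 0].

Lemma sv_Es (v : Lk) X e : le (val v) X -> e \in sv v -> e \in Es le X.
Proof. by move=> h; rewrite mem_enum in_setD => /andP[_ he]; apply: Es_mono h he. Qed.

Lemma sv_pos (v : Lk) : {in sv v, forall e, 0 < mu e}.
Proof.
move=> e; rewrite mem_enum in_setD => /andP[_]; rewrite inEs => /andP[h _].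
by apply: hmu; rewrite /dim (eqP h).
Qed.

Lemma nu_sv (v : Lk) : nu_tilde le mu I v = \prod_(e <- sv v) mu e.
Proof. by rewrite /nu_tilde /sv big_enum. Qed.

Lemma rest_Es (w : Lk) X : #|Vs le (val w)| = n.+2 -> le (val w) X -> rest le I w \in Es le X.
Proof.
move=> hw h; have [hr _ cr] := rest_spec hS hw.
by rewrite inEs cr eqxx (le_trans' hS hr h).
Qed.

Lemma F_valid x : valid_dc (link_le le I) (mu_tilde le mu I) (nu_tilde le mu I)
  (Kx x) (dF x) (cF x).
Proof.
have [hr _] := validP (cx_valid x).
apply/andP; split; apply/forallP => v; rewrite ffunE.
- case hv: (v \in Vs (link_le le I) (Kx x)) => //.
  move: hv; rewrite (inVsl hS) => /andP[_ hv].
  rewrite nu_sv; apply/andP; split => //; apply: enc_lt => e he.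
  by apply: hr; apply: sv_Es hv he.
- case hv: (v \in Es (link_le le I) (Kx x)) => //.
  move: hv; rewrite (inEsl hS) => /andP[/eqP hw hv].
  by apply: hr; apply: rest_Es hw hv.
Qed.

Definition F (x : Up) : Lmunu (link_le le I) (mu_tilde le mu I) (nu_tilde le mu I) :=
  exist _ (Kx x, dF x, cF x) (F_valid x).

Lemma F_order x y : uplink_le (Smu_le le mu) x0 x y =
  Lmunu_le (link_le le I) (mu_tilde le mu I) (nu_tilde le mu I) (F x) (F y).
Proof.
rewrite /uplink_le /Smu_le /Lmunu_le.
change (le (Jx x) (Jx y) && [forall e in Es le (Jx x), cx x e == cx y e] =
  [&& le (Jx x) (Jx y), [forall v in Vs (link_le le I) (Kx x), dF y v == dF x v] &
      [forall w in Es (link_le le I) (Kx x), cF y w == cF x w]]).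
case: (boolP (le (Jx x) (Jx y))) => hxy //=.
have [hrx _] := validP (cx_valid x); have [hry _] := validP (cx_valid y).
apply/idP/idP.
- move/forallP => h.
  have hE e : e \in Es le (Jx x) -> cx x e = cx y e.
    by move=> he; have := h e; rewrite he => /eqP.
  apply/andP; split; apply/forallP => v; apply/implyP => hv; rewrite !ffunE hv.
  + have hv' : v \in Vs (link_le le I) (Kx y).
      by move: hv; rewrite !(inVsl hS) => /andP[-> hv]; rewrite (le_trans' hS hv hxy).
    rewrite hv' eqSS; apply/eqP; apply: enc_ext => e he; symmetry; apply: hE.
    by move: hv; rewrite (inVsl hS) => /andP[_ hv]; apply: sv_Es hv he.
  + have hv' : v \in Es (link_le le I) (Kx y).
      by move: hv; rewrite !(inEsl hS) => /andP[-> hv]; rewrite (le_trans' hS hv hxy).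
    rewrite hv'; apply/eqP; symmetry; apply: hE.
    by move: hv; rewrite (inEsl hS) => /andP[/eqP hw hv]; apply: rest_Es hw hv.
- case/andP => /forallP hd /forallP hc'.
  apply/forallP => e; apply/implyP => he.
  case: (boolP (e \in Es le I)) => heI.
    have [_ _ ax] := up_prop x; have [_ _ ay] := up_prop y.
    by have := forallP ax e; have := forallP ay e; rewrite heI => /eqP <- /eqP <-.
  case: (coverage hS (J := Kx x) he heI) => [[v [hcv hvx hev]] | [w [hcw hwx hre]]].
  + have hv : v \in Vs (link_le le I) (Kx x) by rewrite (inVsl hS) hcv eqxx.
    have hv' : v \in Vs (link_le le I) (Kx y).
      by rewrite (inVsl hS) hcv eqxx (le_trans' hS hvx hxy).
    have := hd v; rewrite hv /= !ffunE hv hv' eqSS => /eqP heq.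
    apply/eqP; apply: (enc_inj (m := mu) (s := sv v) (c1 := cx x) (c2 := cx y) _ _ (esym heq)).
    * move=> e' he'; apply: hrx; exact: sv_Es hvx he'.
    * move=> e' he'; apply: hry; exact: sv_Es (le_trans' hS hvx hxy) he'.
    * by rewrite mem_enum.
  + have hw : w \in Es (link_le le I) (Kx x) by rewrite (inEsl hS) hcw eqxx.
    have hw' : w \in Es (link_le le I) (Kx y).
      by rewrite (inEsl hS) hcw eqxx (le_trans' hS hwx hxy).
    by have := hc' w; rewrite hw /= !ffunE hw hw' hre eq_sym.
Qed.

Lemma Lmunu_refl t : Lmunu_le (link_le le I) (mu_tilde le mu I) (nu_tilde le mu I) t t.
Proof.
rewrite /Lmunu_le /link_le (le_refl hS) /=.
by apply/andP; split; apply/forallP => ?; apply/implyP.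
Qed.

Lemma F_inj : injective F.
Proof.
move=> x y exy.
have hxy : uplink_le (Smu_le le mu) x0 x y by rewrite F_order exy Lmunu_refl.
have hyx : uplink_le (Smu_le le mu) x0 y x by rewrite F_order exy Lmunu_refl.
move: hxy hyx; rewrite /uplink_le /Smu_le.
change (le (Jx x) (Jx y) && [forall e in Es le (Jx x), cx x e == cx y e] ->
  le (Jx y) (Jx x) && [forall e in Es le (Jx y), cx y e == cx x e] -> x = y).
case/andP => h1 /forallP h2 /andP[h3 _].
have eJ : Jx x = Jx y := le_anti hS h1 h3.
have ec : cx x = cx y.
  apply/ffunP => e; case: (boolP (e \in Es le (Jx x))) => he.
    by have := h2 e; rewrite he => /eqP.
  have [_ z1] := validP (cx_valid x); have [_ z2] := validP (cx_valid y).
  by rewrite z1 // z2 // -eJ.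
by apply: val_inj; apply: val_inj; rewrite !vvx eJ ec.
Qed.

Lemma F_surj t : exists x, F x = t.
Proof.
case: t => [[[K d] c'] ht].
have /andP[/forallP hd /forallP hc'] := ht.
pose J := val K.
pose cJ : {ffun T -> nat} := [ffun e => if e \in Es le J then
   (if e \in Es le I then c e
    else if [pick v in Vs (link_le le I) K | e \in Es le (val v) :\: Es le I] is Some v
      then dec mu (sv v) (d v).-1 e
    else if [pick w in Es (link_le le I) K | rest le I w == e] is Some w then c' w
    else 1) else 0].
have hcJ : valid_c le mu J cJ.
  apply/forallP => e; rewrite ffunE; case he: (e \in Es le J) => //=.
  case: ifP => heI; first by have [h _] := validP hc; apply: h.
  case: pickP => [v /andP[hv hev] | _].
    by apply: dec_range; [exact: sv_pos | rewrite mem_enum].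
  case: pickP => [w /andP[hw /eqP hre] | _].
    by have := hc' w; rewrite hw /mu_tilde hre.
  have : dim le e = 1 by move: he; rewrite inEs /dim => /andP[/eqP -> _].
  by move/hmu.
pose y := mkSmu le mu J cJ hcJ.
have hlt : ltb (Smu_le le mu) x0 y.
  rewrite /ltb /Smu_le /=; apply/andP; split.
    apply/eqP => eq; have := congr1 (fun z => (val z).1) eq; rewrite /= => eJ.
    by move: (link_neq K); rewrite -/J eJ eqxx.
  apply/andP; split; first exact: link_le_I.
  apply/forallP => e; apply/implyP => heI.
  by rewrite ffunE (Es_mono (link_le_I K) heI) heI.
exists (exist _ y hlt).
have eK : Kx (exist _ y hlt) = K by apply: val_inj.
apply: val_inj; rewrite /= /dF /cF eK /cx /=.
congr (_, _, _); apply/ffunP => v; rewrite ffunE.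
- case hv: (v \in Vs (link_le le I) K); last by have := hd v; rewrite hv => /eqP ->.
  have := hd v; rewrite hv nu_sv => /andP[d0 d1].
  move: hv; rewrite (inVsl hS) => /andP[/eqP hcv hvK].
  rewrite (@enc_ext _ mu (sv v) cJ (dec mu (sv v) (d v).-1)).
    by rewrite enc_dec ?enc_uniq ?prednK // ?enum_uniq //; exact: sv_pos.
  move=> e he; rewrite ffunE (sv_Es hvK he).
  have hev : e \in Es le (val v) :\: Es le I by rewrite -mem_enum.
  move: (hev); rewrite in_setD => /andP[heI _]; rewrite (negbTE heI).
  case: pickP => [v' /andP[hv' hev'] | none].
    move: hv'; rewrite (inVsl hS) => /andP[/eqP hcv' hv'K].
    by rewrite (U1 hS hcv' hcv hv'K hvK hev' hev).
  by have := none v; rewrite /= (inVsl hS) hcv eqxx hvK hev.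
- case hw: (v \in Es (link_le le I) K); last by have := hc' v; rewrite hw => /eqP ->.
  move: (hw); rewrite (inEsl hS) => /andP[/eqP hcw hwK].
  rewrite ffunE (rest_Es hcw hwK) (negbTE (U2b hS hcw)).
  case: pickP => [v' /andP[hv hev] | _].
    move: hv; rewrite (inVsl hS) => /andP[/eqP hcv _].
    by move: hev; rewrite in_setD (negbTE (U2a hS hcw hcv)) andbF.
  case: pickP => [w' /andP[hw' /eqP hre] | none].
    move: hw'; rewrite (inEsl hS) => /andP[/eqP hcw' hw'K].
    by rewrite (U3 hS hcw' hcw hw'K hwK hre).
  by have := none v; rewrite /= hw eqxx.
Qed.

End Main.
End Aux.
Import Aux.

Theorem lemma5p6 (T : finType) (le : rel T) (hS : simplicial_poset le)
  (mu : T -> nat) (hmu : forall e : T, dim le e = 1 -> 0 < mu e)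
  (I : T) (c : {ffun T -> nat}) (hc : valid_c le mu I c) :
  poset_iso (uplink_le (Smu_le le mu) (mkSmu le mu I c hc))
            (Lmunu_le (link_le le I) (mu_tilde le mu I) (nu_tilde le mu I)).
Proof.
exists (F hS (hc:=hc)); split; last exact: F_order.
have surj := F_surj hS hmu hc.
exists (fun t => proj1_sig (constructive_indefinite_description _ (surj t))).
- move=> x; apply: F_inj.
  exact: (proj2_sig (constructive_indefinite_description _ (surj (F hS (hc:=hc) x)))).
- move=> t; exact: (proj2_sig (constructive_indefinite_description _ (surj t))).
Qed.
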